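(* Let $\mathcal D_0$ be an ordered, oriented Descartes configuration. Then no two distinct circles of the geometric Apollonian super-packing generated by $\mathcal D_0$ cross each other transversally (i.e. no two distinct circles of it meet in exactly two points). Circles of the super-packing may be nested inside one another or tangent to each other.
   Context: Circles are taken in the Riemann sphere $\hat{\mathbb C}=\mathbb R^2\cup\{\infty\}$; lines count as circles. A Descartes configuration is a set of four mutually tangent circles with disjoint interiors (the interior of a circle being one of its two complementary open regions, of a line one of its open half-planes). An ordered, oriented Descartes configuration $\mathcal D=(C_1,C_2,C_3,C_4)$ is such a configuration with an ordering and a total orientation: positively oriented if the interiors are the disjoint ones, negatively oriented if every interior is replaced by the complementary region. The signed curvature $b_i$ of $C_i$ is $1/r$ if its interior is the bounded disk of radius $r$, $-1/r$ if its interior is the unbounded complementary region, $0$ for a line (all signs reversed for negative orientation). The augmented curvature-center coordinate matrix $W_{\mathcal D}$ is the $4\times4$ matrix whose $i$-th row is $(\bar b_i, b_i, b_ix_i, b_iy_i)$, where $(x_i,y_i)$ is the center of $C_i$ and $\bar b_i=b_i(x_i^2+y_i^2)-1/b_i$ is the signed curvature of the image of $C_i$ under inversion in the unit circle; for a line the row is $(2\,p\cdot n,0,n_x,n_y)$ with $n$ the unit normal pointing into its interior and $p$ any point of the line. $W_{\mathcal D}$ determines $\mathcal D$, and a real $4\times 4$ matrix $W$ equals $W_{\mathcal D}$ for some ordered oriented Descartes configuration iff $W^TQ_DW=Q_W$, where $Q_D=I-\tfrac12\mathbf 1\mathbf 1^T$ and $Q_W=\begin{pmatrix}0&-4&0&0\\-4&0&0&0\\0&0&2&0\\0&0&0&2\end{pmatrix}$.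 Let $S_i$ ($i=1,\dots,4$) be the $4\times4$ integer matrix equal to the identity except that its $i$-th row has entry $-1$ in position $i$ and $2$ in the other three positions; e.g. $S_1=\begin{pmatrix}-1&2&2&2\\0&1&0&0\\0&0&1&0\\0&0&0&1\end{pmatrix}$. Let $S_i^\perp=S_i^T$. The Apollonian group $\mathcal A=\langle S_1,\dots,S_4\rangle$, the dual Apollonian group $\mathcal A^\perp=\langle S_1^\perp,\dots,S_4^\perp\rangle$, and the super-Apollonian group $\mathcal A^S=\langle S_1,\dots,S_4,S_1^\perp,\dots,S_4^\perp\rangle$ act on ordered oriented Descartes configurations by $W_{U[\mathcal D]}=UW_{\mathcal D}$. The (algebraic) super-packing generated by $\mathcal D_0$ is the orbit $\mathcal A^S[\mathcal D_0]$; the geometric super-packing generated by $\mathcal D_0$ is the set of all circles belonging to configurations in $\mathcal A^S[\mathcal D_0]$ (it does not depend on the ordering and orientation of $\mathcal D_0$). *)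

(* Defs.v *)
From HB Require Import structures.
From mathcomp Require Import all_boot all_order all_algebra.
From mathcomp Require Import reals.
Set Implicit Arguments. Unset Strict Implicit. Unset Printing Implicit Defensive.
Import Order.TTheory GRing.Theory Num.Theory.
Local Open Scope ring_scope.

Section Apollonian.
Variable R : realType.

(* Points of the Riemann sphere: [Some (x,y)] is a point of R^2, [None] is oo. *)
Definition sphere_pt := option (R * R).

(* An oriented circle in the Riemann sphere, i.e. a circle together with the
   choice of its interior (one of its two complementary open regions;
   the orientation of a Descartes configuration is absorbed in this choice).
   - [OCirc c r inner] : circle of center c and radius r (> 0); its interior
     is the bounded open disk if [inner = true], the unbounded complementary
     region if [inner = false].
   - [OLine p n] : the line through p with unit normal n; its interior is
     the open half-plane into which n points. *)
Inductive ocircle :=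
| OCirc of (R * R) & R & bool
| OLine of (R * R) & (R * R).

Definition ocircle_valid (C : ocircle) : Prop :=
  match C with
  | OCirc _ r _ => 0 < r
  | OLine _ n => n.1 ^+ 2 + n.2 ^+ 2 = 1
  end.

Definition on_circle (C : ocircle) (z : sphere_pt) : Prop :=
  match C, z with
  | OCirc c r _, Some q => (q.1 - c.1) ^+ 2 + (q.2 - c.2) ^+ 2 = r ^+ 2
  | OCirc _ _ _, None => False
  | OLine p n, Some q => n.1 * (q.1 - p.1) + n.2 * (q.2 - p.2) = 0
  | OLine _ _, None => True
  end.

Definition curv (C : ocircle) : R :=
  match C with
  | OCirc _ r inner => if inner then r^-1 else - r^-1
  | OLine _ _ => 0
  end.

(* The augmented curvature-center coordinate row (bbar, b, b x, b y). *)
Definition acc_row (C : ocircle) : 'rV[R]_4 :=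
  match C with
  | OCirc c r inner =>
      let b := curv C in
      \row_(j < 4) [:: b * (c.1 ^+ 2 + c.2 ^+ 2) - b^-1; b; b * c.1; b * c.2]`_j
  | OLine p n =>
      \row_(j < 4) [:: 2 * (p.1 * n.1 + p.2 * n.2); 0; n.1; n.2]`_j
  end.

Definition Q_D : 'M[R]_4 := 1%:M - (1 / 2) *: const_mx 1.

Definition Q_W : 'M[R]_4 :=
  \matrix_(i < 4, j < 4)
    (nth 0 (nth [::] [:: [:: 0; -4; 0; 0]; [:: -4; 0; 0; 0];
                       [:: 0; 0; 2; 0]; [:: 0; 0; 0; 2]] i) j : R).

(* W is the augmented curvature-center coordinate matrix of some ordered,
   oriented Descartes configuration. *)
Definition is_ACC_matrix (W : 'M[R]_4) : Prop := W^T *m Q_D *m W = Q_W.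

Definition S_gen (i : 'I_4) : 'M[R]_4 :=
  \matrix_(j < 4, k < 4)
    (if j == i then (if k == i then -1 else 2) else (j == k)%:R).

Inductive superApollonian : 'M[R]_4 -> Prop :=
| sA_one : superApollonian 1%:M
| sA_S i U : superApollonian U -> superApollonian (S_gen i *m U)
| sA_Sinv i U : superApollonian U -> superApollonian (invmx (S_gen i) *m U)
| sA_ST i U : superApollonian U -> superApollonian ((S_gen i)^T *m U)
| sA_STinv i U : superApollonian U -> superApollonian (invmx ((S_gen i)^T) *m U).

(* C belongs to the geometric super-packing generated by the configuration
   with ACC matrix W0: C is one of the circles of some configuration
   U[D0], U in A^S, i.e. its ACC row is a row of U W0. *)
Definition in_geometric_superpacking (W0 : 'M[R]_4) (C : ocircle) : Prop :=
  ocircle_valid C /\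
  exists U i, superApollonian U /\ row i (U *m W0) = acc_row C.

Definition meet_in_exactly_two_points (C1 C2 : ocircle) : Prop :=
  exists z1 z2 : sphere_pt, z1 <> z2 /\
    forall z, (on_circle C1 z /\ on_circle C2 z) <-> (z = z1 \/ z = z2).

End Apollonian.

(* Main.v *)
Require Import Defs.
From HB Require Import structures.
From mathcomp Require Import all_boot all_order all_algebra.
From mathcomp Require Import reals.
From mathcomp Require Import ring lra.
Import Order.TTheory GRing.Theory Num.Theory.
Local Open Scope ring_scope.
Set Implicit Arguments. Unset Strict Implicit.

Section S.
Variable R : realType.

Notation o0 := (@Ordinal 4 0 isT).
Notation o1 := (@Ordinal 4 1 isT).
Notation o2 := (@Ordinal 4 2 isT).
Notation o3 := (@Ordinal 4 3 isT).

Lemma sum4 (F : 'I_4 -> R) : \sum_(k < 4) F k = F o0 + F o1 + F o2 + F o3.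
Proof.
rewrite !big_ord_recr big_ord0 /= add0r.
by congr (F _ + F _ + F _ + F _); apply: val_inj.
Qed.

Ltac ord4 i := case: i => -[|[|[|[|//]]]] ?.

Definition Pm : 'M[R]_4 :=
  \matrix_(i < 4, j < 4)
    (nth 0 (nth [::] [:: [:: 0; -(1/4); 0; 0]; [:: -(1/4); 0; 0; 0];
                       [:: 0; 0; 1/2; 0]; [:: 0; 0; 0; 1/2]] i) j : R).

Lemma QWP : Q_W R *m Pm = 1%:M.
Proof.
apply/matrixP => a b; rewrite !mxE sum4 !mxE.
ord4 a; ord4 b; rewrite /=; by field.
Qed.

Lemma QDQD : Q_D R *m Q_D R = 1%:M.
Proof.
apply/matrixP => a b; rewrite /Q_D !mxE sum4 !mxE.
ord4 a; ord4 b; rewrite /=; by field.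
Qed.

Lemma SS (i : 'I_4) : S_gen R i *m S_gen R i = 1%:M.
Proof.
apply/matrixP => a b; rewrite !mxE sum4 !mxE.
ord4 i; ord4 a; ord4 b; rewrite /=; ring.
Qed.

Lemma invS (i : 'I_4) : invmx (S_gen R i) = S_gen R i.
Proof.
have [U _] := mulmx1_unit (SS i).
by rewrite -[RHS](mulKmx U) SS mulmx1.
Qed.

Lemma invST (i : 'I_4) : invmx (S_gen R i)^T = (S_gen R i)^T.
Proof. by rewrite -trmx_inv invS. Qed.

Definition good (M : 'M[R]_4) :=
  (forall i j, M i j \is a Num.int) /\
  (forall i, exists2 k, k \is a Num.int & \sum_j M i j = 1 + 2 * k).

Lemma good1 : good 1%:M.
Proof.
split=> [i j|i]; first by rewrite mxE natr_int.
exists 0; first exact: int_num0.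
rewrite sum4 !mxE; ord4 i; rewrite /=; ring.
Qed.

Lemma good_mul V U : good V -> good U -> good (V *m U).
Proof.
move=> [Vi Vs] [Ui Us]; split=> [i j|i].
  rewrite mxE; apply: rpred_sum => k _; exact: rpredM.
have [k0 k0i e0] := Us o0; have [k1 k1i e1] := Us o1.
have [k2 k2i e2] := Us o2; have [k3 k3i e3] := Us o3.
have [kv kvi ev] := Vs i.
exists (kv + (V i o0 * k0 + V i o1 * k1 + V i o2 * k2 + V i o3 * k3)).
  by apply: rpredD => //; rewrite !rpredD // rpredM.
under eq_bigr do rewrite mxE.
rewrite exchange_big /=.
rewrite sum4 -!mulr_sumr e0 e1 e2 e3.
move: ev; rewrite sum4 => ev.
have -> : kv = (V i o0 + V i o1 + V i o2 + V i o3 - 1) / 2 by rewrite ev; by field.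
by field.
Qed.

Ltac wit := first
  [ (exists 0; [exact: int_num0 | ring])
  | (exists 1; [exact: int_num1 | ring])
  | (exists 2; [exact: natr_int | ring])
  | (exists (-1); [by rewrite rpredN int_num1 | ring]) ].

Lemma goodS i : good (S_gen R i).
Proof.
split=> [a b|a].
  rewrite mxE; case: ifP => _; [case: ifP => _|].
  - by rewrite rpredN int_num1.
  - exact: natr_int.
  - exact: natr_int.
rewrite sum4 !mxE; ord4 i; ord4 a; rewrite /=; wit.
Qed.

Lemma goodST i : good (S_gen R i)^T.
Proof.
split=> [a b|a].
  rewrite !mxE; case: ifP => _; [case: ifP => _|].
  - by rewrite rpredN int_num1.
  - exact: natr_int.
  - exact: natr_int.
rewrite sum4 !mxE; ord4 i; ord4 a; rewrite /=; wit.
Qed.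

Lemma good_sA U : superApollonian U -> good U.
Proof.
elim=> [|i V _ IH|i V _ IH|i V _ IH|i V _ IH].
- exact: good1.
- exact: good_mul (goodS i) IH.
- by rewrite invS; exact: good_mul (goodS i) IH.
- exact: good_mul (goodST i) IH.
- by rewrite invST; exact: good_mul (goodST i) IH.
Qed.


Lemma gram W0 : is_ACC_matrix W0 -> W0 *m Pm *m W0^T = Q_D R.
Proof.
rewrite /is_ACC_matrix => H.
have H1 : (W0^T *m Q_D R) *m (W0 *m Pm) = 1%:M by rewrite mulmxA H QWP.
have H2 := mulmx1C H1.
by rewrite -[LHS]mulmx1 -QDQD !mulmxA -(mulmxA _ W0^T) H2 mul1mx.
Qed.

Definition Bf (x y : 'rV[R]_4) := (x *m Pm *m y^T) 0 0.

Lemma BfE x y : Bf x y = - (x 0 o0 * y 0 o1 + x 0 o1 * y 0 o0) / 4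
   + (x 0 o2 * y 0 o2 + x 0 o3 * y 0 o3) / 2.
Proof.
rewrite /Bf !mxE sum4 !mxE !sum4 !mxE /=.
have -> : (0 : 'I_1) = ord0 by apply: val_inj.
by field.
Qed.

Lemma intcase (t : R) : t \is a Num.int -> 0 <= t \/ t <= -1.
Proof.
move/intrP=> [m ->]; case: m => n.
  by left; rewrite ler0z.
by right; rewrite NegzE mulrNz lerN2 -natz ler1z ler1n.

Qed.

Lemma Bgood W0 U1 U2 i1 i2 : is_ACC_matrix W0 -> good U1 -> good U2 ->
  exists2 t, t \is a Num.int &
    2 * Bf (row i1 (U1 *m W0)) (row i2 (U2 *m W0)) = 1 + 2 * t.
Proof.
move=> HW [I1 S1] [I2 S2].
have [k1 k1i e1] := S1 i1; have [k2 k2i e2] := S2 i2.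
rewrite /Bf !row_mul trmx_mul.
have -> : row i1 U1 *m W0 *m Pm *m (W0^T *m (row i2 U2)^T) = row i1 U1 *m (W0 *m Pm *m W0^T) *m (row i2 U2)^T by rewrite !mulmxA.
rewrite gram //.
rewrite /Q_D.
move: e1 e2; rewrite !sum4 => e1 e2.
exists (U1 i1 o0 * U2 i2 o0 + U1 i1 o1 * U2 i2 o1 + U1 i1 o2 * U2 i2 o2
   + U1 i1 o3 * U2 i2 o3 - 1 - k1 - k2 - 2 * k1 * k2).
  by rewrite !(rpredB, rpredD, rpredM, rpred1) // natr_int.
rewrite !mxE !sum4 !mxE !sum4 !mxE /=.

have -> : k1 = (U1 i1 o0 + U1 i1 o1 + U1 i1 o2 + U1 i1 o3 - 1) / 2 by rewrite e1; field.
have -> : k2 = (U2 i2 o0 + U2 i2 o1 + U2 i2 o2 + U2 i2 o3 - 1) / 2 by rewrite e2; field.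
by field.
Qed.


Definition Lf (x : 'rV[R]_4) (z : sphere_pt R) : R :=
  match z with
  | Some q => x 0 o0 + x 0 o1 * (q.1 ^+ 2 + q.2 ^+ 2) - 2 * (x 0 o2 * q.1 + x 0 o3 * q.2)
  | None => x 0 o1
  end.

Lemma eq_scale (c X Y : R) : c != 0 -> (X = Y) <-> (c * (X - Y) = 0).
Proof.
move=> hc; split=> [->|]; first by rewrite subrr mulr0.
by move/eqP; rewrite mulf_eq0 (negbTE hc) /= subr_eq0 => /eqP.
Qed.

Lemma on_L C z : ocircle_valid C -> on_circle C z <-> Lf (acc_row C) z = 0.
Proof.
case: C => [c r inn | p n] /= V; case: z => [q|] /=; rewrite ?mxE /= ?nth0 /=.
- have hr : r != 0 by rewrite gt_eqF.
  rewrite (@eq_scale (if inn then r^-1 else - r^-1)); last first.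
    by case: inn; rewrite ?oppr_eq0 invr_eq0.
  match goal with |- ?A = 0 <-> ?B = 0 => have -> : B = A by case: inn; field end.
  done.
- split=> // H; move: H; case: inn => /eqP; rewrite ?oppr_eq0 invr_eq0 gt_eqF //.
- rewrite (@eq_scale (-2)); last by rewrite oppr_eq0 pnatr_eq0.
  match goal with |- ?A = 0 <-> ?B = 0 => have -> : B = A by ring end.
  done.
- by [].
Qed.


Lemma B_self C : ocircle_valid C -> Bf (acc_row C) (acc_row C) = 1 / 2.
Proof.
rewrite BfE; case: C => [c r inn | p n] /= V; rewrite !mxE /= ?nth0 /=.
  have hr : r != 0 by rewrite gt_eqF.
  by case: inn; field.
by transitivity ((n.1 ^+ 2 + n.2 ^+ 2) / 2); [ring | rewrite V].
Qed.

Lemma sq2 (u v : R) : u ^+ 2 + v ^+ 2 <= 0 -> u = 0 /\ v = 0.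
Proof.
move=> h; have hu := sqr_ge0 u; have hv := sqr_ge0 v.
have e1 : u ^+ 2 = 0 by lra.
have e2 : v ^+ 2 = 0 by lra.
by split; apply/eqP; rewrite -sqrf_eq0; apply/eqP.
Qed.

Lemma row0 (x : 'rV[R]_4) : x 0 o0 = 0 -> x 0 o1 = 0 -> x 0 o2 = 0 -> x 0 o3 = 0 -> x = 0.
Proof.
move=> h0 h1 h2 h3; apply/rowP => j; rewrite mxE; ord4 j.
- by rewrite -h0; congr (x _ _); apply: val_inj.
- by rewrite -h1; congr (x _ _); apply: val_inj.
- by rewrite -h2; congr (x _ _); apply: val_inj.
- by rewrite -h3; congr (x _ _); apply: val_inj.
Qed.

Lemma key x z1 z2 : Lf x z1 = 0 -> Lf x z2 = 0 -> z1 <> z2 -> Bf x x <= 0 -> x = 0.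
Proof.
move=> L1 L2 hz hB.
have hK : x 0 o2 ^+ 2 + x 0 o3 ^+ 2 - x 0 o0 * x 0 o1 <= 0.
  have -> : x 0 o2 ^+ 2 + x 0 o3 ^+ 2 - x 0 o0 * x 0 o1 = 2 * Bf x x by rewrite BfE; field.
  lra.
suff hb : x 0 o1 = 0.
  move: hK; rewrite hb mulr0 subr0 => /sq2 [hc hd].
  apply: row0 => //.
  case: z1 hz L1 L2 => [q|] hz L1 L2; last first.
    case: z2 hz L2 => [q|] // hz L2.
    by move: L2; rewrite /= hb hc hd => H; rewrite -H; ring.
  by move: L1; rewrite /= hb hc hd => H; rewrite -H; ring.
case: z1 z2 hz L1 L2 => [q1|] [q2|] hz L1 L2 /=; [| done | done | by case: hz].
rewrite /= in L1 L2.
apply/eqP; apply/negPn/negP => hb.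
set a := x 0 o0 in L1 L2 hK; set b := x 0 o1 in L1 L2 hK hb;
set c := x 0 o2 in L1 L2 hK; set d := x 0 o3 in L1 L2 hK.
have s1 : (b * q1.1 - c) ^+ 2 + (b * q1.2 - d) ^+ 2 <= 0.
  have -> : (b * q1.1 - c) ^+ 2 + (b * q1.2 - d) ^+ 2 =
    (c ^+ 2 + d ^+ 2 - a * b) + b * (a + b * (q1.1 ^+ 2 + q1.2 ^+ 2) - 2 * (c * q1.1 + d * q1.2)) by ring.
  by rewrite L1 mulr0 addr0.
have s2 : (b * q2.1 - c) ^+ 2 + (b * q2.2 - d) ^+ 2 <= 0.
  have -> : (b * q2.1 - c) ^+ 2 + (b * q2.2 - d) ^+ 2 =
    (c ^+ 2 + d ^+ 2 - a * b) + b * (a + b * (q2.1 ^+ 2 + q2.2 ^+ 2) - 2 * (c * q2.1 + d * q2.2)) by ring.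
  by rewrite L2 mulr0 addr0.
move/sq2: s1 => [/eqP u1 /eqP v1]; move/sq2: s2 => [/eqP u2 /eqP v2].
apply: hz; congr Some.
move: u1 u2 v1 v2; rewrite !subr_eq0 => /eqP u1 /eqP u2 /eqP v1 /eqP v2.
clear L1 L2 hK. case: q1 q2 u1 u2 v1 v2 => [x1 y1] [x2 y2] /= u1 u2 v1 v2.
congr pair; apply: (mulfI hb); by rewrite ?u1 ?u2 ?v1 ?v2.
Qed.


Lemma Lf_lin x y s z : Lf (x + s *: y) z = Lf x z + s * Lf y z.
Proof. by case: z => [q|] /=; rewrite !mxE; ring. Qed.

Lemma Lf0 z : Lf 0 z = 0.
Proof. by case: z => [q|] /=; rewrite !mxE; ring. Qed.

Lemma Bf_lin x y s : Bf (x + s *: y) (x + s *: y) = Bf x x + 2 * s * Bf x y + s ^+ 2 * Bf y y.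
Proof. by rewrite !BfE !mxE; field. Qed.

End S.

Theorem theorem3p1 (R : realType) (W0 : 'M[R]_4) :
  is_ACC_matrix W0 ->
  forall C1 C2 : ocircle R,
    in_geometric_superpacking W0 C1 ->
    in_geometric_superpacking W0 C2 ->
    (exists z, ~ (on_circle C1 z <-> on_circle C2 z)) ->
    ~ meet_in_exactly_two_points C1 C2.
Proof.
move=> HW C1 C2 [V1 [U1 [i1 [sA1 e1]]]] [V2 [U2 [i2 [sA2 e2]]]] [z0 hz0] [z1 [z2 [hne hall]]].
have [t ti ht] := Bgood i1 i2 HW (good_sA sA1) (good_sA sA2).
rewrite e1 e2 in ht.
have L1 z : on_circle C1 z <-> Lf (acc_row C1) z = 0 := on_L z V1.
have L2 z : on_circle C2 z <-> Lf (acc_row C2) z = 0 := on_L z V2.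
have [h11 h12] : on_circle C1 z1 /\ on_circle C2 z1 by apply/hall; left.
have [h21 h22] : on_circle C1 z2 /\ on_circle C2 z2 by apply/hall; right.
have B1 := B_self V1; have B2 := B_self V2.
have E11 : Lf (acc_row C1) z1 = 0 by apply/L1.
have E12 : Lf (acc_row C2) z1 = 0 by apply/L2.
have E21 : Lf (acc_row C1) z2 = 0 by apply/L1.
have E22 : Lf (acc_row C2) z2 = 0 by apply/L2.
suff [s [hs hx]] : exists s : R, (s = 1 \/ s = -1) /\ acc_row C1 + s *: acc_row C2 = 0.
  apply: hz0; rewrite L1 L2.
  have := Lf_lin (acc_row C1) (acc_row C2) s z0; rewrite hx Lf0 => E.
  have -> : Lf (acc_row C1) z0 = - s * Lf (acc_row C2) z0.
    by apply/eqP; rewrite mulNr -(subr_eq0) opprK E.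
  case: hs => ->; rewrite ?mulN1r ?opprK ?mul1r ?oppr_eq0; split=> H.
  - by apply/eqP; rewrite -oppr_eq0; apply/eqP.
  - by rewrite H oppr0.
  - by [].
  - by [].
have [tp|tn] := intcase ti.
- exists (-1); split; first by right.
  apply: (key (z1 := z1) (z2 := z2)) => //.
  + by rewrite Lf_lin E11 E12 mulr0 addr0.
  + by rewrite Lf_lin E21 E22 mulr0 addr0.
  + rewrite Bf_lin B1 B2.
    have -> : Bf (acc_row C1) (acc_row C2) = (1 + 2 * t) / 2 by rewrite -ht; field.
    lra.
- exists 1; split; first by left.
  apply: (key (z1 := z1) (z2 := z2)) => //.
  + by rewrite Lf_lin E11 E12 mulr0 addr0.
  + by rewrite Lf_lin E21 E22 mulr0 addr0.
  + rewrite Bf_lin B1 B2.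
    have -> : Bf (acc_row C1) (acc_row C2) = (1 + 2 * t) / 2 by rewrite -ht; field.
    lra.
Qed.
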